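(* In the setting described in the context, for $m\in\mathcal{M}$ and $s\in\mathcal{S}$ define $V$ by the Bellman equation $$V(m,s)=\min_{g^r\in\{1,\dots,k\},\,g^d\in\{1,\dots,k\}}\Big(\ell(m,s,g^r,g^d)+\beta\sum_{\hat m\in\mathcal{M}}\mathbb{P}(\hat m\mid m,g^r,g^d)\,V(\hat m,f(s))\Big),$$ and let $(\mathfrak{g}^{r,*}(m,s),\mathfrak{g}^{d,*}(m,s))$ be a minimizer of the right-hand side. Then the control law $$u^{i,*}_t=\mathbb{1}(x^i_t=0)\,\mathfrak{g}^{r,*}(m_t,s_t)+\mathbb{1}(x^i_t=1)\,\mathfrak{g}^{d,*}(m_t,s_t),\quad i\in\{1,\dots,n\},\ t\in\mathbb{N},$$ is optimal, i.e. the corresponding strategy $g^*$ satisfies $J(g^* )\le J(g)$ for every admissible strategy $g$.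
   Context: Setting: $n\in\mathbb{N}$ users, demand probability $p\in(0,1)$, $k$ options $\{1,\dots,k\}$. Each option $u$ has participation rate $\alpha(u)\in[0,1]$, delivery rate $q(u,m)\in(0,1]$, reserve price $c_r(u,1-m)\ge0$ and demand price $c_d(u,m)\ge0$, for $m\in\mathcal{M}:=\{0,\frac1n,\dots,1\}$. User $i$ has state $x^i_t\in\{0,1\}$ (1 = has a demand); mean-field $m_t=\frac1n\sum_i\mathbb{1}(x^i_t=1)$. Given option $u^i_t$ and $m_t$: $\mathbb{P}(x^i_{t+1}=1\mid x^i_t=0,u^i_t,m_t)=(1-\alpha(u^i_t))p$, $\mathbb{P}(x^i_{t+1}=0\mid x^i_t=1,u^i_t,m_t)=q(u^i_t,m_t)$ (complementary probabilities otherwise), users' transitions conditionally independent given current joint states and actions. Per-user cost $c(x,u,m)=\mathbb{1}(x=0)c_r(u,1-m)+\mathbb{1}(x=1)c_d(u,m)$. Desired load trajectory: set $\mathcal{S}$, maps $f:\mathcal{S}\to\mathcal{S}$, $h:\mathcal{S}\to[0,1]$, known initial $s_1$, $s_{t+1}=f(s_t)$, $\theta_t=h(s_t)$. $D:\mathcal{M}\times[0,1]\to\mathbb{R}_{\ge0}$ is a distance function, $\beta\in(0,1)$ a discount factor. Admissible strategies $g=(g_1,g_2,\dots)$ have $u^i_t=g_t(x^i_t,m_{1:t})$ with $g_t:\{0,1\}\times\mathcal{M}^t\to\{1,\dots,k\}$, common to all users. The cost is $J(g)=\mathbb{E}^g\big[\sum_{t=1}^\infty\beta^{t-1}\frac1n\big(\sum_{i=1}^n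 c(x^i_t,u^i_t,m_t)+D(m_t,\theta_t)\big)\big]$. Define $\ell(m,s,g^r,g^d):=(1-m)c_r(g^r,1-m)+m\,c_d(g^d,m)+D(m,h(s))$. The transition kernel $\mathbb{P}(\hat m\mid m,g^r,g^d)$ is the probability that $m_{t+1}=\hat m$ given $m_t=m$ when users with state $0$ use option $g^r$ and users with state $1$ use option $g^d$; explicitly it is the distribution of $\frac1n(Y_0+Y_1)$ with $Y_0\sim\mathrm{Binomial}(n(1-m),(1-\alpha(g^r))p)$ and $Y_1\sim\mathrm{Binomial}(nm,1-q(g^d,m))$ independent. *)

(* Defs.v *)
From HB Require Import structures.
From mathcomp Require Import all_boot all_order all_algebra.
From mathcomp Require Import all_classical all_reals all_analysis.
Set Implicit Arguments. Unset Strict Implicit. Unset Printing Implicit Defensive.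
Import Order.TTheory GRing.Theory Num.Theory.
Import numFieldNormedType.Exports.
Local Open Scope ring_scope.

Section Model.
Variables (R : realType) (n k : nat) (S : Type).
Variables (p beta : R) (alpha : 'I_k -> R) (q cr cd : 'I_k -> R -> R).
Variables (D : R -> R -> R) (f : S -> S) (h : S -> R) (s1 : S).

(* joint state of the n users: x i = true  iff user i has a demand *)
Definition jstate := {ffun 'I_n -> bool}.

(* number of users with a demand; the mean-field is  m = mcnt x / n *)
Definition mcnt (x : jstate) : 'I_n.+1 := inord #|[set i | x i]|.

Definition mreal (j : 'I_n.+1) : R := (j%:R) / (n%:R).

Definition sstate (t : nat) : S := iter t.-1 f s1.

Definition ucost (xi : bool) (u : 'I_k) (m : R) : R :=
  if xi then cd u m else cr u (1 - m).

Definition ptrans (xi : bool) (u : 'I_k) (m : R) (xi' : bool) : R :=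
  if xi then (if xi' then 1 - q u m else q u m)
  else (if xi' then (1 - alpha u) * p else 1 - (1 - alpha u) * p).

(* admissible strategies: u^i_t = g t x^i_t m_{1:t}, where the mean-field
   history m_{1:t} is encoded by the sequence of demand counts (in
   chronological order, size t). *)
Definition strategy := nat -> bool -> seq 'I_n.+1 -> 'I_k.

Definition xdef : jstate := [ffun _ => false].

(* Expected discounted cost of the next T stages, given the (reversed)
   history [x_t; ...; x_1] of joint states (t = size hist). *)
Fixpoint Jrec (g : strategy) (T : nat) (hist : seq jstate) : R :=
  match T with
  | 0 => 0
  | T'.+1 =>
    let t := size hist in
    let x := head xdef hist in
    let mh := rev (map mcnt hist) in
    let m := mreal (mcnt x) in
    let u := fun i : 'I_n => g t (x i) mh in
    beta ^+ t.-1 *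
      ((n%:R)^-1 * (\sum_(i < n) ucost (x i) (u i) m) + D m (h (sstate t)))
    + \sum_(x' : jstate)
        (\prod_(i < n) ptrans (x i) (u i) m (x' i)) * Jrec g T' (x' :: hist)
  end.

Definition JT (P0 : jstate -> R) (g : strategy) (T : nat) : R :=
  \sum_(x1 : jstate) P0 x1 * Jrec g T [:: x1].

Definition Jcost (P0 : jstate -> R) (g : strategy) : R := limn (JT P0 g).

Definition lcost (j : 'I_n.+1) (s : S) (gr gd : 'I_k) : R :=
  let m := mreal j in
  (1 - m) * cr gr (1 - m) + m * cd gd m + D m (h s).

Definition binpmf (N a : nat) (r : R) : R := 'C(N, a)%:R * r ^+ a * (1 - r) ^+ (N - a).

(* P(mhat | m, g^r, g^d): law of (Y0 + Y1)/n, Y0 ~ Bin(n(1-m),(1-alpha g^r)p),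
   Y1 ~ Bin(nm, 1 - q(g^d,m)), independent; m = j/n, mhat = j'/n. *)
Definition kernel (j j' : 'I_n.+1) (gr gd : 'I_k) : R :=
  \sum_(a < (n - j).+1) \sum_(b < j.+1)
    (if (a + b == j')%N then
       binpmf (n - j) a ((1 - alpha gr) * p) * binpmf j b (1 - q gd (mreal j))
     else 0).

Definition bellmanQ (V : 'I_n.+1 -> S -> R) (j : 'I_n.+1) (s : S) (gr gd : 'I_k) : R :=
  lcost j s gr gd + beta * \sum_(j' < n.+1) kernel j j' gr gd * V j' (f s).

Definition gstar (gR gD : 'I_n.+1 -> S -> 'I_k) : strategy :=
  fun t xi mh =>
    let j := last ord0 mh in
    if xi then gD j (sstate t) else gR j (sstate t).

End Model.

(* Main.v *)
Require Import Defs.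
From HB Require Import structures.
From mathcomp Require Import all_boot all_order all_algebra.
From mathcomp Require Import all_classical all_reals all_analysis.
From mathcomp Require Import ring lra.
Import Order.TTheory GRing.Theory Num.Theory.
Import numFieldNormedType.Exports.
Local Open Scope ring_scope.
Lemma prod_poly (R : comNzRingType) n (a : 'I_n -> R) :
  \prod_(i < n) ((1 - a i)%:P + (a i)%:P * 'X) =
  \sum_(x' : {ffun 'I_n -> bool})
     (\prod_(i < n) (if x' i then a i else 1 - a i))%:P * 'X^#|[set i | x' i]|.
Proof.
transitivity (\prod_(i < n) \sum_(b : bool) (if b then (a i)%:P * 'X else (1 - a i)%:P)).
  by apply: eq_bigr => i _; rewrite big_bool /= addrC.
rewrite bigA_distr_bigA /=; apply: eq_bigr => x' _.
transitivity (\prod_(i < n) ((if x' i then a i else 1 - a i)%:P * 'X^(x' i : nat))).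
  by apply: eq_bigr => i _; case: (x' i); rewrite ?expr1 ?expr0 ?mulr1.
rewrite big_split /= -rmorph_prod; congr (_ * _).
rewrite prodrXr; congr ('X^_).
rewrite -sum1_card [RHS]big_mkcond /=.
apply: eq_bigr => i _; rewrite inE; by case: (x' i).
Qed.

Lemma prod_split (R : comNzRingType) n (x : {ffun 'I_n -> bool}) (r0 r1 : R) :
  \prod_(i < n) ((1 - (if x i then r1 else r0))%:P + (if x i then r1 else r0)%:P * 'X) =
  ((1 - r0)%:P + r0%:P * 'X) ^+ (n - #|[set i | x i]|) *
  ((1 - r1)%:P + r1%:P * 'X) ^+ #|[set i | x i]|.
Proof.
rewrite (bigID (fun i => x i)) /= mulrC; congr (_ * _).
  rewrite (eq_bigr (fun _ => ((1 - r0)%:P + r0%:P * 'X))); last by move=> i /negbTE ->.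
  rewrite prodr_const; congr (_ ^+ _).
  transitivity #|~: [set i | x i]|; first by apply: eq_card => i; rewrite !inE.
  by rewrite cardsCs finset.setCK card_ord.
rewrite (eq_bigr (fun _ => ((1 - r1)%:P + r1%:P * 'X))); last by move=> i ->.
by rewrite prodr_const; congr (_ ^+ _); apply: eq_card => i; rewrite !inE.
Qed.

Lemma binexp (R : comNzRingType) N (r : R) :
  ((1 - r)%:P + r%:P * 'X) ^+ N =
  \sum_(a < N.+1) ('C(N, a)%:R * r ^+ a * (1 - r) ^+ (N - a))%:P * 'X^a.
Proof.
rewrite exprDn; apply: eq_bigr => a _.
rewrite exprMn -!rmorphXn -mulr_natl -mulr_natl !rmorphM /= rmorph_nat.
ring.
Qed.

Lemma coef_prod_sums (R : comNzRingType) M N (c : nat -> R) (d : nat -> R) (k : nat) :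
  ((\sum_(a < M) (c a)%:P * 'X^a) * (\sum_(b < N) (d b)%:P * 'X^b))`_k =
  \sum_(a < M) \sum_(b < N) (if (a + b == k)%N then c a * d b else 0).
Proof.
rewrite big_distrlr coef_sum; apply: eq_bigr => a _.
rewrite coef_sum; apply: eq_bigr => b _.
rewrite /= mulrACA -rmorphM -exprD coefCM coefXn eq_sym.
by case: eqP; rewrite ?mulr1 ?mulr0.
Qed.

Lemma mcntE n (x : jstate n) : (mcnt x : nat) = #|[set i | x i]|.
Proof.
rewrite /mcnt inordK // ltnS; apply: leq_trans (max_card _) _; by rewrite card_ord.
Qed.

Lemma sum_F (R : realType) n k (p : R) (alpha : 'I_k -> R) (q : 'I_k -> R -> R)
  (x : jstate n) (gr gd : 'I_k) (F : 'I_n.+1 -> R) :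
  \sum_(x' : jstate n) (\prod_(i < n) ptrans p alpha q (x i) (if x i then gd else gr)
                            (mreal R (mcnt x)) (x' i)) * F (mcnt x')
  = \sum_(j' < n.+1) Defs.kernel p alpha q (mcnt x) j' gr gd * F j'.
Proof.
set r0 := (1 - alpha gr) * p.
set r1 := 1 - q gd (mreal R (mcnt x)).
pose a i := if x i then r1 else r0.
have Hw : forall x' : jstate n, \prod_(i < n) ptrans p alpha q (x i) (if x i then gd else gr)
                            (mreal R (mcnt x)) (x' i) =
     \prod_(i < n) (if x' i then a i else 1 - a i).
  move=> x'; apply: eq_bigr => i _; rewrite /ptrans /a /r1 /r0.
  by case: (x i); case: (x' i) => //; rewrite opprB addrC subrK.
have Hc : forall kk : nat,
    \sum_(x' : jstate n) (\prod_(i < n) (if x' i then a i else 1 - a i)) * (#|[set i | x' i]| == kk)%:R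
  = \sum_(a0 < (n - #|[set i | x i]|).+1) \sum_(b < #|[set i | x i]|.+1)
      (if (a0 + b == kk)%N then binpmf (n - #|[set i | x i]|) a0 r0 * binpmf #|[set i | x i]| b r1 else 0).
  move=> kk.
  transitivity ((\prod_(i < n) ((1 - a i)%:P + (a i)%:P * 'X))`_kk).
    rewrite prod_poly coef_sum; apply: eq_bigr => x' _.
    by rewrite coefCM coefXn eq_sym.
  rewrite /a prod_split !binexp.
  exact: (coef_prod_sums _ _ _ (fun a0 => binpmf (n - #|[set i | x i]|) a0 r0)
            (fun b => binpmf #|[set i | x i]| b r1) kk).
transitivity (\sum_(x' : jstate n) \sum_(j' < n.+1)
   (\prod_(i < n) (if x' i then a i else 1 - a i)) * (#|[set i | x' i]| == j')%:R * F j').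
  apply: eq_bigr => x' _; rewrite Hw (bigD1 (mcnt x')) //= [X in _ + X]big1 ?addr0.
    by rewrite mcntE eqxx mulr1.
  move=> j' /negbTE Hj; rewrite -mcntE.
  suff -> : ((mcnt x' : nat) == j') = false by rewrite mulr0 mul0r.
  by apply/negbTE/negP => /eqP E; move: Hj; rewrite (_ : mcnt x' = j') ?eqxx //; apply: val_inj.
rewrite exchange_big /=; apply: eq_bigr => j' _.
by rewrite -big_distrl /= Hc /Defs.kernel mcntE.
Qed.

Lemma sum_prob (R : realType) n k (p : R) (alpha : 'I_k -> R) (q : 'I_k -> R -> R)
  (x : jstate n) (u : 'I_n -> 'I_k) (m : R) :
  \sum_(x' : jstate n) \prod_(i < n) ptrans p alpha q (x i) (u i) m (x' i) = 1.
Proof.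
rewrite -(bigA_distr_bigA (fun i b => ptrans p alpha q (x i) (u i) m b)) /=.
apply: big1 => i _; rewrite big_bool /ptrans.
by case: (x i) => /=; rewrite ?subrK // addrC subrK.
Qed.

Lemma stage_eq (R : realType) n k (cr cd : 'I_k -> R -> R) (x : jstate n) (gr gd : 'I_k) :
  (0 < n)%N ->
  n%:R^-1 * \sum_(i < n) ucost cr cd (x i) (if x i then gd else gr) (mreal R (mcnt x)) =
  (1 - mreal R (mcnt x)) * cr gr (1 - mreal R (mcnt x)) + mreal R (mcnt x) * cd gd (mreal R (mcnt x)).
Proof.
move=> n0.
set m := mreal R (mcnt x).
rewrite (bigID (fun i => x i)) /=.
rewrite (eq_bigr (fun _ => cd gd m)); last by move=> i ->.
rewrite [X in _ + X](eq_bigr (fun _ => cr gr (1 - m))); last by move=> i /negbTE ->.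
rewrite !sumr_const.
have c1 : #|(fun i => x i)| = #|[set i | x i]| by apply: eq_card => i; rewrite inE.
have c2 : #|(fun i => ~~ x i)| = (n - #|[set i | x i]|)%N.
  transitivity #|~: [set i | x i]|; first by apply: eq_card => i; rewrite !inE.
  by rewrite cardsCs finset.setCK card_ord.
have cle : (#|[set i | x i]| <= n)%N by rewrite -mcntE -ltnS.
rewrite c1 c2 -(mulr_natr (cd gd m)) -(mulr_natr (cr gr (1 - m))) /m /mreal mcntE natrB //.
have nz : (n%:R : R) != 0 by rewrite pnatr_eq0 -lt0n.
by field.
Qed.

Lemma le_sum_term (R : realType) (I : finType) (F : I -> R) i :
  (forall j, 0 <= F j) -> F i <= \sum_j F j.
Proof. by move=> H; rewrite (bigD1 i) //= lerDl sumr_ge0. Qed.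

Theorem theorem3 (R : realType) (n k : nat) (S : Type)
  (p beta : R) (alpha : 'I_k -> R) (q cr cd : 'I_k -> R -> R)
  (D : R -> R -> R) (f : S -> S) (h : S -> R) (s1 : S)
  (P0 : jstate n -> R)
  (V : 'I_n.+1 -> S -> R) (gR gD : 'I_n.+1 -> S -> 'I_k) :
  (0 < n)%N ->
  0 < p < 1 ->
  0 < beta < 1 ->
  (forall u, 0 <= alpha u <= 1) ->
  (forall u (j : 'I_n.+1), 0 < q u (mreal R j) <= 1) ->
  (forall u (j : 'I_n.+1), 0 <= cr u (1 - mreal R j)) ->
  (forall u (j : 'I_n.+1), 0 <= cd u (mreal R j)) ->
  (forall (j : 'I_n.+1) th, 0 <= th <= 1 -> 0 <= D (mreal R j) th) ->
  (forall s, 0 <= h s <= 1) ->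
  (forall x, 0 <= P0 x) -> \sum_(x : jstate n) P0 x = 1 ->
  (* V is the (bounded) solution of the Bellman equation and (gR, gD) a minimizer *)
  (exists B : R, forall j s, `|V j s| <= B) ->
  (forall j s, V j s = bellmanQ p beta alpha q cr cd D f h V j s (gR j s) (gD j s)) ->
  (forall j s gr gd, bellmanQ p beta alpha q cr cd D f h V j s (gR j s) (gD j s)
                      <= bellmanQ p beta alpha q cr cd D f h V j s gr gd) ->
  forall g : strategy n k,
    Jcost p beta alpha q cr cd D f h s1 P0 (gstar f s1 gR gD)
    <= Jcost p beta alpha q cr cd D f h s1 P0 g.
Proof.
move=> n0 /andP[p0 p1] /andP[b0 b1] Halpha Hq Hcr Hcd HD Hh HP0 HP01 [B HB] HV Hmin g.
pose J := @Jrec R n k S p beta alpha q cr cd D f h s1.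
have B0 : 0 <= B by apply: le_trans (HB ord0 s1); exact: normr_ge0.
have HVle : forall j s, V j s <= B by move=> j s; exact: le_trans (ler_norm _) (HB j s).
have HVge : forall j s, - B <= V j s.
  by move=> j s; rewrite lerNl; apply: le_trans (HB j s); rewrite -normrN ler_norm.
have Hm : forall j : 'I_n.+1, 0 <= mreal R j <= 1.
  move=> j; rewrite /mreal divr_ge0 ?ler0n //= ler_pdivrMr ?ltr0n // mul1r ler_nat.
  by rewrite -ltnS ltn_ord.
have Hpt : forall xi u (j : 'I_n.+1) b, 0 <= ptrans p alpha q xi u (mreal R j) b.
  move=> xi u j b; have /andP[a0 a1] := Halpha u; have /andP[q0 q1] := Hq u j.
  by case: xi; case: b; rewrite /ptrans; nra.
have Hw0 : forall (x x' : jstate n) (u : 'I_n -> 'I_k),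
    0 <= \prod_(i < n) ptrans p alpha q (x i) (u i) (mreal R (mcnt x)) (x' i).
  by move=> x x' u; apply: prodr_ge0 => i _.
have Hl0 : forall (j : 'I_n.+1) (s : S) (gr gd : 'I_k), 0 <= lcost cr cd D h j s gr gd.
  move=> j s gr gd; have /andP[m0 m1] := Hm j; rewrite /lcost.
  by rewrite !addr_ge0 ?mulr_ge0 ?subr_ge0 ?Hcr ?Hcd ?HD ?Hh.
have step : forall (g0 : strategy n k) T (x : jstate n) rest,
  let t := (size rest).+1 in let mh := rev (map (@mcnt n) (x :: rest)) in
  J g0 T.+1 (x :: rest) =
  beta ^+ size rest * lcost cr cd D h (mcnt x) (sstate f s1 t) (g0 t false mh) (g0 t true mh)
  + \sum_(x' : jstate n) (\prod_(i < n) ptrans p alpha q (x i)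
       (if x i then g0 t true mh else g0 t false mh) (mreal R (mcnt x)) (x' i))
       * J g0 T (x' :: x :: rest).
  move=> g0 T x rest t mh.
  rewrite [LHS]/J [LHS]/=; congr (_ + _).
    congr (_ * _); rewrite /lcost -(stage_eq _ _ _ cr cd x (g0 t false mh) (g0 t true mh) n0).
    congr (_ * _ + _); apply: eq_bigr => i _; by case: (x i).
  apply: eq_bigr => x' _; congr (_ * _); apply: eq_bigr => i _; by case: (x i).
have Hsp : forall (x : jstate n) (gr gd : 'I_k),
    \sum_(x' : jstate n) \prod_(i < n) ptrans p alpha q (x i) (if x i then gd else gr)
        (mreal R (mcnt x)) (x' i) = 1.
  by move=> x gr gd; exact: (sum_prob _ _ _ p alpha q x (fun i => if x i then gd else gr)).
have Es : forall t, sstate f s1 t.+2 = f (sstate f s1 t.+1) by [].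
have Hsum : forall (x : jstate n) (gr gd : 'I_k) (c : R) (G : 'I_n.+1 -> R),
  \sum_(x' : jstate n) (\prod_(i < n) ptrans p alpha q (x i) (if x i then gd else gr)
        (mreal R (mcnt x)) (x' i)) * (beta * G (mcnt x') - c)
  = beta * \sum_(j' < n.+1) Defs.kernel p alpha q (mcnt x) j' gr gd * G j' - c.
  move=> x gr gd c G.
  rewrite (eq_bigr (fun x' : jstate n => beta * ((\prod_(i < n) ptrans p alpha q (x i) (if x i then gd else gr)
        (mreal R (mcnt x)) (x' i)) * G (mcnt x')) - c * (\prod_(i < n) ptrans p alpha q (x i) (if x i then gd else gr)
        (mreal R (mcnt x)) (x' i)))); last by move=> x' _; ring.
  by rewrite sumrB -!mulr_sumr sum_F Hsp mulr1.
have LB : forall (g0 : strategy n k) T (x : jstate n) rest,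
  beta ^+ size rest * V (mcnt x) (sstate f s1 (size rest).+1) - beta ^+ (size rest + T) * B
    <= J g0 T (x :: rest).
  move=> g0; elim=> [|T IH] x rest.
    rewrite /J /= addn0 -mulrBr; apply: mulr_ge0_le0; first exact: exprn_ge0 (ltW b0).
    by rewrite subr_le0.
  rewrite step /=.
  set t := (size rest).+1; set mh := rev _.
  set gr := g0 t false mh; set gd := g0 t true mh.
  have H1 : \sum_(x' : jstate n) (\prod_(i < n) ptrans p alpha q (x i) (if x i then gd else gr)
        (mreal R (mcnt x)) (x' i)) * (beta * (beta ^+ t.-1 * V (mcnt x') (sstate f s1 t.+1))
             - beta ^+ (t + T) * B)
     <= \sum_(x' : jstate n) (\prod_(i < n) ptrans p alpha q (x i) (if x i then gd else gr)
        (mreal R (mcnt x)) (x' i)) * J g0 T (x' :: x :: rest).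
    apply: ler_sum => x' _; apply: ler_wpM2l; first exact: Hw0.
    by have := IH x' (x :: rest); rewrite /= exprS mulrA.
  apply: le_trans (lerD (lexx _) H1).
  rewrite (Hsum x gr gd _ (fun j => beta ^+ size rest * V j (sstate f s1 t.+1))).
  have HQ : V (mcnt x) (sstate f s1 t) <=
      bellmanQ p beta alpha q cr cd D f h V (mcnt x) (sstate f s1 t) gr gd.
    by rewrite {1}HV; exact: Hmin.
  rewrite /bellmanQ in HQ.
  have HQ' := ler_wpM2l (exprn_ge0 (size rest) (ltW b0)) HQ.
  rewrite mulrDr in HQ'.
  rewrite /t Es -/t.
  rewrite (eq_bigr (fun j' => beta ^+ size rest * (Defs.kernel p alpha q (mcnt x) j' gr gd *
       V j' (f (sstate f s1 t))))); last by move=> j' _; rewrite mulrCA.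
  rewrite -mulr_sumr /t addnS addSn.
  move: HQ'; set L := lcost _ _ _ _ _ _ _ _; set Sg := \sum_(j' < n.+1) _.
  rewrite -/t. move=> HQ'. nra.
pose gs := gstar f s1 gR gD.
have UBs : forall T (x : jstate n) rest,
  J gs T (x :: rest) <=
  beta ^+ size rest * V (mcnt x) (sstate f s1 (size rest).+1) + beta ^+ (size rest + T) * B.
  elim=> [|T IH] x rest.
    rewrite /J /= addn0 -mulrDr; apply: mulr_ge0; first exact: exprn_ge0 (ltW b0).
    by have := HVge (mcnt x) (sstate f s1 (size rest).+1); lra.
  rewrite step /=.
  set t := (size rest).+1; set mh := rev _.
  have Elast : last ord0 mh = mcnt x by rewrite /mh rev_cons last_rcons.
  rewrite Elast.
  set gr := gR (mcnt x) (sstate f s1 t); set gd := gD (mcnt x) (sstate f s1 t).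
  have H1 : \sum_(x' : jstate n) (\prod_(i < n) ptrans p alpha q (x i) (if x i then gd else gr)
        (mreal R (mcnt x)) (x' i)) * J gs T (x' :: x :: rest)
     <= \sum_(x' : jstate n) (\prod_(i < n) ptrans p alpha q (x i) (if x i then gd else gr)
        (mreal R (mcnt x)) (x' i)) * (beta * (beta ^+ t.-1 * V (mcnt x') (sstate f s1 t.+1))
             - - (beta ^+ (t + T) * B)).
    apply: ler_sum => x' _; apply: ler_wpM2l; first exact: Hw0.
    by have := IH x' (x :: rest); rewrite /= exprS mulrA opprK.
  apply: le_trans (lerD (lexx _) H1) _.
  rewrite (Hsum x gr gd _ (fun j => beta ^+ size rest * V j (sstate f s1 t.+1))).
  have HQ : V (mcnt x) (sstate f s1 t) =
      bellmanQ p beta alpha q cr cd D f h V (mcnt x) (sstate f s1 t) gr gd by rewrite {1}HV.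
  rewrite /bellmanQ in HQ.
  have HQ' := congr1 (fun y => beta ^+ size rest * y) HQ.
  rewrite /= mulrDr in HQ'.
  rewrite /t Es -/t.
  rewrite (eq_bigr (fun j' => beta ^+ size rest * (Defs.kernel p alpha q (mcnt x) j' gr gd *
       V j' (f (sstate f s1 t))))); last by move=> j' _; rewrite mulrCA.
  rewrite -mulr_sumr /t addnS addSn.
  move: HQ'; set L := lcost _ _ _ _ _ _ _ _; set Sg := \sum_(j' < n.+1) _.
  rewrite -/t. move=> HQ'. nra.
pose Kc := \sum_(u : 'I_k) \sum_(j : 'I_n.+1) (cr u (1 - mreal R j) + cd u (mreal R j)).
have Kc0 : 0 <= Kc by apply: sumr_ge0 => u _; apply: sumr_ge0 => j _; rewrite addr_ge0.
have Hcrle : forall u (j : 'I_n.+1), cr u (1 - mreal R j) <= Kc.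
  move=> u j; apply: le_trans (le_sum_term _ _ (fun u => \sum_(j : 'I_n.+1) (cr u (1 - mreal R j) + cd u (mreal R j))) u _).
    apply: le_trans (le_sum_term _ _ (fun j => cr u (1 - mreal R j) + cd u (mreal R j)) j _).
      by rewrite lerDl.
    by move=> j'; rewrite addr_ge0.
  by move=> u'; apply: sumr_ge0 => j' _; rewrite addr_ge0.
have Hcdle : forall u (j : 'I_n.+1), cd u (mreal R j) <= Kc.
  move=> u j; apply: le_trans (le_sum_term _ _ (fun u => \sum_(j : 'I_n.+1) (cr u (1 - mreal R j) + cd u (mreal R j))) u _).
    apply: le_trans (le_sum_term _ _ (fun j => cr u (1 - mreal R j) + cd u (mreal R j)) j _).
      by rewrite lerDr.
    by move=> j'; rewrite addr_ge0.
  by move=> u'; apply: sumr_ge0 => j' _; rewrite addr_ge0.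
have HDle : forall (x : jstate n) s, D (mreal R (mcnt x)) (h s) <= B + B.
  move=> x s.
  set gr := gR (mcnt x) s; set gd := gD (mcnt x) s.
  have HQ := HV (mcnt x) s; rewrite /bellmanQ /lcost -/gr -/gd in HQ.
  have HS : beta * (- B) <= beta * \sum_(j' < n.+1) Defs.kernel p alpha q (mcnt x) j' gr gd * V j' (f s).
    rewrite -[X in _ <= X]subr0 -(Hsum x gr gd 0 (fun j => V j (f s))).
    apply: le_trans (_ : \sum_(x' : jstate n) (\prod_(i < n) ptrans p alpha q (x i) (if x i then gd else gr)
        (mreal R (mcnt x)) (x' i)) * (beta * (- B) - 0) <= _).
      by rewrite -big_distrl /= Hsp mul1r subr0.
    apply: ler_sum => x' _; apply: ler_wpM2l; first exact: Hw0.
    by rewrite !subr0 ler_wpM2l ?(ltW b0) ?HVge.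
  have /andP[m0 m1] := Hm (mcnt x).
  have c1 : 0 <= (1 - mreal R (mcnt x)) * cr gr (1 - mreal R (mcnt x)) by rewrite mulr_ge0 ?subr_ge0.
  have c2 : 0 <= mreal R (mcnt x) * cd gd (mreal R (mcnt x)) by rewrite mulr_ge0.
  have := HVle (mcnt x) s.
  move: HS HQ c1 c2; set Sg := \sum_(j' < n.+1) _; move=> HS HQ c1 c2 HVl.
  nra.
pose K := Kc + Kc + (B + B).
have K0 : 0 <= K by rewrite /K !addr_ge0.
have Hlcle : forall (x : jstate n) s gr gd, lcost cr cd D h (mcnt x) s gr gd <= K.
  move=> x s gr gd; rewrite /lcost /K.
  have /andP[m0 m1] := Hm (mcnt x).
  apply: lerD; [apply: lerD|exact: HDle].
    apply: le_trans (Hcrle gr (mcnt x)); apply: ler_piMl; first exact: Hcr.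
    by rewrite lerBlDr lerDl.
  by apply: le_trans (Hcdle gd (mcnt x)); apply: ler_piMl; first exact: Hcd.
have b1' : 1 - beta != 0 by rewrite subr_eq0 eq_sym lt_eqF.
have UBg : forall (g0 : strategy n k) T (x : jstate n) rest,
  J g0 T (x :: rest) <= beta ^+ size rest * (K / (1 - beta)).
  move=> g0; elim=> [|T IH] x rest.
    rewrite /J /=; apply: mulr_ge0; first exact: exprn_ge0 (ltW b0).
    by rewrite divr_ge0 // subr_ge0 ltW.
  rewrite step /=.
  set t := (size rest).+1; set mh := rev _.
  set gr := g0 t false mh; set gd := g0 t true mh.
  have H1 : \sum_(x' : jstate n) (\prod_(i < n) ptrans p alpha q (x i) (if x i then gd else gr)
        (mreal R (mcnt x)) (x' i)) * J g0 T (x' :: x :: rest)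
     <= \sum_(x' : jstate n) (\prod_(i < n) ptrans p alpha q (x i) (if x i then gd else gr)
        (mreal R (mcnt x)) (x' i)) * (beta ^+ t * (K / (1 - beta))).
    apply: ler_sum => x' _; apply: ler_wpM2l; first exact: Hw0.
    exact: IH.
  rewrite -big_distrl /= Hsp mul1r in H1.
  have H2 := ler_wpM2l (exprn_ge0 (size rest) (ltW b0)) (Hlcle x (sstate f s1 t) gr gd).
  have E : beta ^+ size rest * K + beta ^+ t * (K / (1 - beta)) = beta ^+ size rest * (K / (1 - beta)).
    by rewrite /t exprS; field.
  rewrite -E; exact: lerD.
have Mono : forall (g0 : strategy n k) T (x : jstate n) rest,
  J g0 T (x :: rest) <= J g0 T.+1 (x :: rest).
  move=> g0; elim=> [|T IH] x rest.
    rewrite step big1 ?addr0; first by rewrite [X in X <= _]/J /= mulr_ge0 ?exprn_ge0 ?(ltW b0).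
    by move=> x' _; rewrite /J /= mulr0.
  rewrite (step g0 T.+1) (step g0 T); apply: lerD; first exact: lexx.
  apply: ler_sum => x' _; apply: ler_wpM2l; first exact: Hw0.
  exact: IH.
pose JT0 := @JT R n k S p beta alpha q cr cd D f h s1 P0.
pose E0 := \sum_(x1 : jstate n) P0 x1 * V (mcnt x1) (sstate f s1 1).
have HJg : forall T, E0 - beta ^+ T * B <= JT0 g T.
  move=> T; rewrite /JT0 /JT /E0.
  have -> : \sum_(x1 : jstate n) P0 x1 * V (mcnt x1) (sstate f s1 1) - beta ^+ T * B =
            \sum_(x1 : jstate n) P0 x1 * (V (mcnt x1) (sstate f s1 1) - beta ^+ T * B).
    by rewrite [RHS](eq_bigr (fun x1 => P0 x1 * V (mcnt x1) (sstate f s1 1) - (beta ^+ T * B) * P0 x1));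
      [rewrite sumrB -mulr_sumr HP01 mulr1 | move=> x1 _; ring].
  apply: ler_sum => x1 _; apply: ler_wpM2l; first exact: HP0.
  by have := LB g T x1 [::]; rewrite /= expr0 mul1r add0n.
have HJs : forall T, JT0 gs T <= E0 + beta ^+ T * B.
  move=> T; rewrite /JT0 /JT /E0.
  have -> : \sum_(x1 : jstate n) P0 x1 * V (mcnt x1) (sstate f s1 1) + beta ^+ T * B =
            \sum_(x1 : jstate n) P0 x1 * (V (mcnt x1) (sstate f s1 1) + beta ^+ T * B).
    by rewrite [RHS](eq_bigr (fun x1 => P0 x1 * V (mcnt x1) (sstate f s1 1) + (beta ^+ T * B) * P0 x1));
      [rewrite big_split /= -mulr_sumr HP01 mulr1 | move=> x1 _; ring].
  apply: ler_sum => x1 _; apply: ler_wpM2l; first exact: HP0.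
  by have := UBs T x1 [::]; rewrite /= expr0 mul1r add0n.
have cvgJ : forall g0 : strategy n k, cvgn (JT0 g0).
  move=> g0; apply: cvgP; apply: nondecreasing_cvgn.
    apply/nondecreasing_seqP => T; rewrite /JT0 /JT.
    apply: ler_sum => x1 _; apply: ler_wpM2l; first exact: HP0.
    exact: Mono.
  exists (K / (1 - beta)) => y [T _ <-]; rewrite /JT0 /JT.
  apply: le_trans (_ : \sum_(x1 : jstate n) P0 x1 * (K / (1 - beta)) <= _).
    apply: ler_sum => x1 _; apply: ler_wpM2l; first exact: HP0.
    by have := UBg g0 T x1 [::]; rewrite /= expr0 mul1r.
  by rewrite -big_distrl /= HP01 mul1r.
have Hgeo : ((fun T => 2 * B * beta ^+ T) @ \oo --> (2 * B * 0 : R))%classic.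
  apply: (@cvgM _ _ _ _ (fun=> 2 * B) (GRing.exp beta)); first exact: cvg_cst.
  by apply: cvg_expr; rewrite ger0_norm ?ltW.
have Hu : ((fun T => JT0 g T + 2 * B * beta ^+ T) @ \oo --> (limn (JT0 g) + 2 * B * 0 : R))%classic.
  exact: (cvgD (cvgJ g) Hgeo).
rewrite /Jcost -/(JT0 gs) -/(JT0 g).
have := ler_lim (cvgJ gs) (cvgP _ Hu) (nearW _ _).
have Hle : forall T, JT0 gs T <= JT0 g T + 2 * B * beta ^+ T.
  by move=> T; have := HJs T; have := HJg T; lra.
move=> H; have := H _ _ Hle.
rewrite (cvg_lim (@Rhausdorff R) Hu) mulr0 addr0.
by apply; exact: _.
Qed.
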